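(* Let $D\ge 2$, $\eta=\mathrm{diag}(-1,1,\dots,1)$, and let $M$ be an arbitrary invertible real $D\times D$ matrix. If the matrix $\eta M^t\eta M$ has no (real) negative eigenvalues, then $M$ can be written as $M=\lambda s$ with $\lambda$ a real Lorentz matrix (i.e. $\lambda^t\eta\lambda=\eta$) and $s$ a real symmetric matrix.
   Context: $m^t$ denotes the transpose of the matrix $m$. *)

(* Defs.v *)
From HB Require Import structures.
From mathcomp Require Import all_boot all_order all_algebra.
From mathcomp Require Import reals.
Set Implicit Arguments. Unset Strict Implicit. Unset Printing Implicit Defensive.
Import Order.TTheory GRing.Theory Num.Theory.
Local Open Scope ring_scope.

Definition eta_mx (R : numDomainType) (D : nat) : 'M[R]_D :=
  \matrix_(i < D, j < D) (if i == j then (if val i == 0%N then -1 else 1) else 0).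

Definition lorentz_mx (R : numDomainType) (D : nat) (L : 'M[R]_D) : Prop :=
  L^T *m eta_mx R D *m L = eta_mx R D.

(* Main.v *)
Require Import Defs.
From HB Require Import structures.
From mathcomp Require Import all_boot all_order all_algebra.
From mathcomp Require Import reals complex.
From mathcomp Require Import ring lra.
Import Order.TTheory GRing.Theory Num.Theory.
Local Open Scope ring_scope.
Lemma sqrt_poly_ex (F : numFieldType) (rs : seq F) (f : F -> F) :
  (forall z, z \in rs -> f z ^+ 2 = z /\ f z != 0) ->
  exists q : {poly F}, (\prod_(z <- rs) ('X - z%:P)) %| q ^+ 2 - 'X
     /\ forall z, z \in rs -> q.[z] = f z.
Proof.
elim: rs => [|a l IH] Hf.
  by exists 0; rewrite big_nil dvd1p; split => // z; rewrite in_nil.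
have [q [Hd Hv]] : exists q : {poly F}, (\prod_(z <- l) ('X - z%:P)) %| q ^+ 2 - 'X
     /\ forall z, z \in l -> q.[z] = f z.
  by apply: IH => z zl; apply: Hf; rewrite inE zl orbT.
set m := \prod_(z <- l) ('X - z%:P) in Hd.
set h := (q ^+ 2 - 'X) %/ m.
have Hh : q ^+ 2 - 'X = h * m by rewrite divpK.
have [fa2 fa0] := Hf a (mem_head _ _).
have m0 : m != 0 by rewrite monic_neq0 // monic_prod_XsubC.
have Hha : q.[a] ^+ 2 - a = h.[a] * m.[a].
  by have := congr1 (fun p => p.[a]) Hh; rewrite !hornerE.
have two0 : (2%:R : F) != 0 by rewrite pnatr_eq0.
pose c := if m.[a] == 0 then - h.[a] / (2%:R * q.[a]) else (f a - q.[a]) / m.[a].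
exists (q + c%:P * m); split.
  rewrite big_cons.
  have -> : (q + c%:P * m) ^+ 2 - 'X
     = (q ^+ 2 - 'X) + (2%:R * c%:P * q + c%:P ^+ 2 * m) * m by ring.
  rewrite Hh -mulrDl dvdp_mul2r // dvdp_XsubCl rootE !hornerE; apply/eqP.
  rewrite /c; have [ma0|ma0] := eqVneq m.[a] 0.
    have al : a \in l by rewrite -root_prod_XsubC rootE ma0.
    have qa0 : q.[a] != 0 by rewrite Hv.
    by rewrite ma0 /=; field.
  rewrite /=.
  have Eh : h.[a] = (q.[a] ^+ 2 - f a ^+ 2) / m.[a] by rewrite fa2 Hha mulfK.
  rewrite Eh; field.
  by [].
move=> z; rewrite inE => /orP [/eqP ->|zl].
  rewrite !hornerE /c; have [ma0|ma0] := eqVneq m.[a] 0.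
    have al : a \in l by rewrite -root_prod_XsubC rootE ma0.
    by rewrite ma0 mulr0 addr0 Hv.
  by rewrite /= divfK // addrC subrK.
have : root m z by rewrite root_prod_XsubC.
by rewrite rootE => /eqP mz; rewrite !hornerE mz mulr0 addr0 Hv.
Qed.

Lemma sqrt_poly_uniq (F : numFieldType) (rs : seq F) (f : F -> F) q1 q2 :
  (forall z, z \in rs -> f z != 0) ->
  (\prod_(z <- rs) ('X - z%:P)) %| q1 ^+ 2 - 'X ->
  (\prod_(z <- rs) ('X - z%:P)) %| q2 ^+ 2 - 'X ->
  (forall z, z \in rs -> q1.[z] = f z) ->
  (forall z, z \in rs -> q2.[z] = f z) ->
  (\prod_(z <- rs) ('X - z%:P)) %| q1 - q2.
Proof.
move=> Hf H1 H2 V1 V2.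
have two0 : (2%:R : F) != 0 by rewrite pnatr_eq0.
have cop : coprimep (\prod_(z <- rs) ('X - z%:P)) (q1 + q2).
  elim: rs Hf V1 V2 {H1 H2} => [|a l IH] Hf V1 V2.
    by rewrite big_nil coprime1p.
  rewrite big_cons coprimepMl; apply/andP; split.
    rewrite coprimep_sym coprimep_XsubC rootE hornerD V1 ?V2 ?mem_head //.
    by rewrite -mulr2n -mulr_natl mulf_neq0 // Hf // mem_head.
  apply: IH => z zl; [apply: Hf|apply: V1|apply: V2]; by rewrite inE zl orbT.
rewrite -(Gauss_dvdpl _ cop).
have -> : (q1 - q2) * (q1 + q2) = (q1 ^+ 2 - 'X) - (q2 ^+ 2 - 'X) by ring.
exact: dvdp_sub.
Qed.
Lemma sqrtc_conj (R : rcfType) (a b : R) :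
  (b != 0) || (0 <= a) -> sqrtc (conjc (a +i* b)%C) = conjc (sqrtc (a +i* b)%C).
Proof.
move=> H; rewrite /sqrtc /conjc /= sqrrN oppr_eq0.
move: H; case: eqP => [->|/eqP b0] /= H.
  rewrite expr0n /= addr0 sqrtr_sqr ger0_norm // subrr mul0r sqrtr0.
  by rewrite mulr0 oppr0.
by rewrite sgrN mulNr.
Qed.
Lemma real_sqrt_poly (R : realType) n (A : 'M[R]_n.+1) :
  A \in unitmx -> ~ (exists a, a < 0 /\ eigenvalue A a) ->
  exists r : {poly R}, horner_mx A r ^+ 2 = A.
Proof.
move=> Au Hneg.
set p := map_poly (real_complex R) (char_poly A).
have pm : p \is monic by rewrite map_monic char_poly_monic.
have [rs Hrs] := closed_field_poly_normal p.
rewrite (monicP pm) scale1r in Hrs.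
have rootP z : (z \in rs) = root p z by rewrite Hrs root_prod_XsubC.
have Hz z : z \in rs -> (complex.Im z != 0) || (0 < complex.Re z).
  rewrite rootP; case: z => a b; rewrite -[complex.Im _]/b -[complex.Re _]/a.
  have [->|//] := eqVneq b 0; rewrite /= => Hr.
  have : root (char_poly A) a.
    by move: Hr; rewrite complexr0 /p fmorph_root.
  rewrite -eigenvalue_root_char => ev.
  case: (ltrgtP a 0) => [an|//|a0].
    by exfalso; apply: Hneg; exists a.
  exfalso; move: ev; rewrite a0 => /eigenvalueP [v].
  rewrite scale0r => vA vn0.
  by move: vn0; rewrite -[v](mulmxK Au) vA mul0mx eqxx.
have Hf z : z \in rs -> sqrtc z ^+ 2 = z /\ sqrtc z != 0.
  move=> zr; split; first exact: sqr_sqrtc.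
  rewrite sqrtc_eq0; move: (Hz z zr); apply: contraL => /eqP ->.
  by rewrite /= eqxx ltxx.
have [q [Hq Vq]] := @sqrt_poly_ex R[i] rs (@sqrtc R) Hf.
rewrite -Hrs in Hq.
set qb := map_poly (@conjc R) q.
have pc : map_poly (@conjc R) p = p.
  rewrite /p -map_poly_comp; apply: eq_map_poly => x /=; exact: conjc_real.
have Hqb : p %| qb ^+ 2 - 'X.
  have -> : qb ^+ 2 - 'X = map_poly (@conjc R) (q ^+ 2 - 'X).
    by rewrite rmorphB /= rmorphXn /= map_polyX.
  by rewrite -pc dvdp_map.
have Vqb z : z \in rs -> qb.[z] = sqrtc z.
  move=> zr; rewrite -{1}(conjcK z) horner_map /= Vq; last first.
    by rewrite rootP -{1}pc fmorph_root -rootP.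
  move: (Hz z zr); case: z {zr} => a b; rewrite -[complex.Im _]/b -[complex.Re _]/a => H.
  rewrite -[in RHS](conjcK (sqrtc _)) -sqrtc_conj //.
  by case/orP: H => [->//|/ltW ->]; rewrite orbT.
have Hd : p %| q - qb.
  rewrite Hrs; apply: (@sqrt_poly_uniq _ rs (@sqrtc R)); rewrite -?Hrs //.
  by move=> z /Hf [].
set r := \poly_(i < size q) complex.Re q`_i.
have Hr : map_poly (real_complex R) r = q - (2%:R^-1)%:P * (q - qb).
  apply/polyP => i; rewrite coef_map coef_poly coefB coefCM coefB coef_map /=.
  case: ltnP => [lt|ge].
    rewrite ReJ_add; field.
    by [] .
  rewrite nth_default // (rmorph0 (@conjc R)) !subrr mulr0 subrr.
  exact: (rmorph0 (real_complex R)).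
have Hp : p %| map_poly (real_complex R) (r ^+ 2 - 'X).
  rewrite rmorphB /= rmorphXn /= map_polyX Hr.
  set k := (2%:R^-1)%:P.
  have -> : (q - k * (q - qb)) ^+ 2 - 'X
      = (q ^+ 2 - 'X) - (q - qb) * (k * (2%:R * q - k * (q - qb))) by ring.
  by rewrite dvdp_sub // dvdp_mulr.
rewrite /p dvdp_map in Hp.
exists r.
have : horner_mx A (r ^+ 2 - 'X) = 0.
  by rewrite -(divpK Hp) rmorphM /= Cayley_Hamilton mulr0.
by rewrite rmorphB rmorphXn /= horner_mx_X => /eqP; rewrite subr_eq0 => /eqP.
Qed.
Lemma horner_mx_tr (R : comNzRingType) n (A E : 'M[R]_n.+1) (p : {poly R}) :
  A^T *m E = E *m A -> (horner_mx A p)^T *m E = E *m horner_mx A p.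
Proof.
move=> AE; elim/poly_ind: p => [|p c IH].
  by rewrite rmorph0 trmx0 mul0mx mulmx0.
rewrite rmorphD rmorphM /= horner_mx_X horner_mx_C.
have -> : horner_mx A p * A = horner_mx A p *m A by [].
have comm : horner_mx A p *m A = A *m horner_mx A p.
  have -> : horner_mx A p *m A = horner_mx A p * horner_mx A 'X by rewrite horner_mx_X.
  have -> : A *m horner_mx A p = horner_mx A 'X * horner_mx A p by rewrite horner_mx_X.
  by rewrite -!rmorphM mulrC.
rewrite linearD /= trmx_mul tr_scalar_mx mulmxDl mulmxDr -mulmxA IH mulmxA AE.
by rewrite -mulmxA -comm mulmxA scalar_mxC.
Qed.

Theorem proposition4 (R : realType) (D : nat) (M : 'M[R]_D) :
  (2 <= D)%N ->
  M \in unitmx ->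
  ~ (exists a : R, a < 0 /\ eigenvalue (eta_mx R D *m M^T *m eta_mx R D *m M) a) ->
  exists (L S : 'M[R]_D), lorentz_mx L /\ S^T = S /\ M = L *m S.
Proof.
case: D M => [|n] M // _ Mu Hneg.
set E := eta_mx R n.+1 in Hneg *.
have ET : E^T = E.
  apply/matrixP => i j; rewrite !mxE eq_sym.
  by case: (eqVneq i j) => [->|].
have EE : E *m E = 1%:M.
  apply/matrixP => i j; rewrite !mxE (bigD1 i) //= big1 => [|k ki]; last first.
    by rewrite mxE eq_sym (negbTE ki) mul0r.
  rewrite addr0 !mxE eqxx; case: (eqVneq i j) => [->|]; rewrite ?mulr0 //.
  by case: (val j == 0%N); rewrite ?mulrNN mulr1.
have Eu : E \in unitmx by case: (mulmx1_unit EE).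
set A := E *m M^T *m E *m M in Hneg.
have EA : E *m A = M^T *m E *m M by rewrite /A !mulmxA EE mul1mx.
have AT : A^T *m E = E *m A.
  rewrite EA /A !trmx_mul trmxK ET -!mulmxA EE mulmx1.
  by rewrite !mulmxA.
have Au : A \in unitmx by rewrite /A !unitmx_mul Eu unitmx_tr Mu.
have [r Hr] := @real_sqrt_poly _ _ _ Au Hneg.
set X := horner_mx A r in Hr.
have XT : X^T *m E = E *m X by apply: (@horner_mx_tr _ _ A E r).
have XX : X *m X = A by rewrite mulmxE -expr2.
have Xu : X \in unitmx by move: Au; rewrite -XX unitmx_mul => /andP [].
set S := E *m X.
have ST : S^T = S by rewrite /S trmx_mul ET XT.
have Su : S \in unitmx by rewrite unitmx_mul Eu Xu.
exists (M *m invmx S), S; split; last by split => //; rewrite mulmxKV.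
have key : M^T *m E *m M = S *m E *m S.
  by rewrite -EA -XX /S !mulmxA -[E *m X *m E *m E]mulmxA EE mulmx1.
rewrite /lorentz_mx trmx_mul trmx_inv ST -!mulmxA (mulmxA M^T) (mulmxA _ M).
rewrite key -[S *m E *m S *m invmx S]mulmxA (mulmxV Su) mulmx1.
by rewrite mulmxA (mulVmx Su) mul1mx.
Qed.
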